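(* Let $G$ be a discrete group and let $X$ be a $G$-boundary such that the action of $G$ on $X$ is not topologically free. Then for every $x\in X$ and every $t_1,\dots,t_n\in G$, the subgroup $\bigcap_{i=1}^n t_iG_xt_i^{-1}$ is non-trivial, where $G_x$ is the stabilizer of $x$. If moreover $G$ has no non-trivial finite normal subgroup, then this intersection is infinite.
   Context: A compact Hausdorff $G$-space $X$ is a $G$-boundary if the action is minimal (every orbit dense) and strongly proximal (for every pair of Borel probability measures $\mu,\nu$ on $X$ there is a net $t_i\in G$ with $\lim t_i\mu=\lim t_i\nu$ weak* ). The action is topologically free if for every $s\in G\setminus\{e\}$ the fixed point set $\{x: sx=x\}$ has empty interior. $G_x=\{s\in G: sx=x\}$. *)

(* Defs.v *)
From Stdlib Require Import Reals List.
Open Scope R_scope.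

Record is_group (G : Type) (mul : G -> G -> G) (inv : G -> G) (e : G) : Prop := {
  grp_assoc : forall a b c, mul a (mul b c) = mul (mul a b) c;
  grp_idl : forall a, mul e a = a;
  grp_idr : forall a, mul a e = a;
  grp_invl : forall a, mul (inv a) a = e;
  grp_invr : forall a, mul a (inv a) = e }.

Definition is_subgroup {G : Type} (mul : G -> G -> G) (inv : G -> G) (e : G)
  (H : G -> Prop) : Prop :=
  H e /\ (forall a b, H a -> H b -> H (mul a b)) /\ (forall a, H a -> H (inv a)).

Definition is_normal {G : Type} (mul : G -> G -> G) (inv : G -> G)
  (H : G -> Prop) : Prop :=
  forall g h, H h -> H (mul (mul g h) (inv g)).

Definition finite_set {T : Type} (A : T -> Prop) : Prop :=
  exists l : list T, forall a, A a -> In a l.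

Definition no_nontrivial_finite_normal {G : Type} (mul : G -> G -> G)
  (inv : G -> G) (e : G) : Prop :=
  forall N : G -> Prop, is_subgroup mul inv e N -> is_normal mul inv N ->
    finite_set N -> forall s, N s -> s = e.

Record is_topology (X : Type) (op : (X -> Prop) -> Prop) : Prop := {
  top_full : op (fun _ => True);
  top_empty : op (fun _ => False);
  top_inter : forall U V, op U -> op V -> op (fun x => U x /\ V x);
  top_union : forall (F : (X -> Prop) -> Prop),
      (forall U, F U -> op U) -> op (fun x => exists U, F U /\ U x) }.

Definition compact_sp {X : Type} (op : (X -> Prop) -> Prop) : Prop :=
  forall (I : Type) (U : I -> X -> Prop), (forall i, op (U i)) ->
    (forall x, exists i, U i x) ->
    exists l : list I, forall x, exists i, In i l /\ U i x.

Definition hausdorff_sp {X : Type} (op : (X -> Prop) -> Prop) : Prop :=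
  forall x y, x <> y -> exists U V, op U /\ op V /\ U x /\ V y /\
    (forall z, U z -> V z -> False).

Definition continuous_map {X : Type} (op : (X -> Prop) -> Prop) (f : X -> X) : Prop :=
  forall U, op U -> op (fun x => U (f x)).

Definition continuous_real {X : Type} (op : (X -> Prop) -> Prop) (f : X -> R) : Prop :=
  forall x eps, 0 < eps -> exists U, op U /\ U x /\
    forall y, U y -> Rabs (f y - f x) < eps.

Definition sigma_algebra {X : Type} (S : (X -> Prop) -> Prop) : Prop :=
  S (fun _ => True) /\
  (forall A, S A -> S (fun x => ~ A x)) /\
  (forall A : nat -> X -> Prop, (forall n, S (A n)) -> S (fun x => exists n, A n x)).

Definition borel {X : Type} (op : (X -> Prop) -> Prop) (A : X -> Prop) : Prop :=
  forall S : (X -> Prop) -> Prop, sigma_algebra S -> (forall U, op U -> S U) -> S A.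

Definition prob_measure {X : Type} (op : (X -> Prop) -> Prop)
  (mu : (X -> Prop) -> R) : Prop :=
  (forall A, borel op A -> 0 <= mu A) /\
  mu (fun _ => True) = 1 /\
  (forall A : nat -> X -> Prop, (forall n, borel op (A n)) ->
     (forall n m x, n <> m -> A n x -> A m x -> False) ->
     infinite_sum (fun n => mu (A n)) (mu (fun x => exists n, A n x))).

Definition lower_sum {X : Type} (op : (X -> Prop) -> Prop) (mu : (X -> Prop) -> R)
  (f : X -> R) (s : R) : Prop :=
  exists l : list (R * (X -> Prop)),
    (forall p, In p l -> borel op (snd p)) /\
    (forall x, exists p, In p l /\ snd p x) /\
    (forall (i j : nat) x, i <> j -> (i < length l)%nat -> (j < length l)%nat ->
        snd (nth i l (0%R, fun _ => False)) x ->
        snd (nth j l (0%R, fun _ => False)) x -> False) /\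
    (forall p x, In p l -> snd p x -> fst p <= f x) /\
    s = fold_right (fun p acc => fst p * mu (snd p) + acc) 0 l.

(* Integral of a bounded Borel function (e.g. continuous on a compact_sp space)
   against a finite measure: supremum of the lower simple sums. *)
Definition integral_is {X : Type} (op : (X -> Prop) -> Prop) (mu : (X -> Prop) -> R)
  (f : X -> R) (v : R) : Prop :=
  is_lub (lower_sum op mu f) v.

Definition push {X : Type} (h : X -> X) (mu : (X -> Prop) -> R) : (X -> Prop) -> R :=
  fun A => mu (fun x => A (h x)).

Record directed (D : Type) (le : D -> D -> Prop) : Prop := {
  dir_inh : inhabited D;
  dir_refl : forall d, le d d;
  dir_trans : forall a b c, le a b -> le b c -> le a c;
  dir_up : forall a b, exists c, le a c /\ le b c }.

Definition weak_star_lim {X : Type} (op : (X -> Prop) -> Prop) {D : Type}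
  (le : D -> D -> Prop) (nu : D -> (X -> Prop) -> R) (lam : (X -> Prop) -> R) : Prop :=
  forall f : X -> R, continuous_real op f ->
    forall v, integral_is op lam f v ->
    forall eps, 0 < eps -> exists d0, forall d, le d0 d ->
      forall w, integral_is op (nu d) f w -> Rabs (w - v) < eps.

Definition is_action {G X : Type} (mul : G -> G -> G) (e : G)
  (op : (X -> Prop) -> Prop) (act : G -> X -> X) : Prop :=
  (forall x, act e x = x) /\
  (forall g h x, act (mul g h) x = act g (act h x)) /\
  (forall g, continuous_map op (act g)).

Definition minimal_action {G X : Type} (op : (X -> Prop) -> Prop) (act : G -> X -> X) : Prop :=
  forall x U, op U -> (exists y, U y) -> exists g, U (act g x).

Definition strongly_proximal {G X : Type} (op : (X -> Prop) -> Prop)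
  (act : G -> X -> X) : Prop :=
  forall mu nu, prob_measure op mu -> prob_measure op nu ->
    exists (D : Type) (le : D -> D -> Prop) (t : D -> G), directed D le /\
      exists lam, prob_measure op lam /\
        weak_star_lim op le (fun d => push (act (t d)) mu) lam /\
        weak_star_lim op le (fun d => push (act (t d)) nu) lam.

Definition G_boundary {G X : Type} (op : (X -> Prop) -> Prop) (act : G -> X -> X) : Prop :=
  minimal_action op act /\ strongly_proximal op act.

Definition topologically_free {G X : Type} (e : G) (op : (X -> Prop) -> Prop)
  (act : G -> X -> X) : Prop :=
  forall s, s <> e -> forall U, op U -> (forall y, U y -> act s y = y) ->
    forall y, ~ U y.

Definition stabilizer {G X : Type} (act : G -> X -> X) (x : X) : G -> Prop :=
  fun s => act s x = x.

Definition conj_intersection {G X : Type} (mul : G -> G -> G) (inv : G -> G)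
  (act : G -> X -> X) (x : X) (ts : list G) : G -> Prop :=
  fun s => forall t, In t ts -> exists h, stabilizer act x h /\ s = mul (mul t h) (inv t).

(* Main.v *)
Require Import Defs.
From Stdlib Require Import Reals List Lia Lra ClassicalEpsilon FunctionalExtensionality PropExtensionality Classical Arith.
Open Scope R_scope.

Lemma set_ext {X : Type} (A B : X -> Prop) : (forall x, A x <-> B x) -> A = B.
Proof. intro H; apply functional_extensionality; intro x; apply propositional_extensionality; auto. Qed.

Definition indic (P : Prop) : R := if excluded_middle_informative P then 1 else 0.
Lemma indic_T (P : Prop) : P -> indic P = 1.
Proof. unfold indic; destruct excluded_middle_informative; tauto. Qed.
Lemma indic_F (P : Prop) : ~ P -> indic P = 0.
Proof. unfold indic; destruct excluded_middle_informative; tauto. Qed.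
Lemma indic_01 (P : Prop) : 0 <= indic P <= 1.
Proof. unfold indic; destruct excluded_middle_informative; lra. Qed.

Definition lsum {A : Type} (phi : A -> R) (l : list A) : R :=
  fold_right (fun p acc => phi p + acc) 0 l.

Lemma lsum_le {A} (f g : A -> R) l : (forall a, In a l -> f a <= g a) -> lsum f l <= lsum g l.
Proof. induction l; simpl; intros; [lra|]. assert (f a <= g a) by auto. assert (lsum f l <= lsum g l) by auto. lra. Qed.

Lemma lsum_ext {A} (f g : A -> R) l : (forall a, In a l -> f a = g a) -> lsum f l = lsum g l.
Proof. induction l; simpl; intros; [lra|]. rewrite H, IHl; auto. Qed.

Lemma lsum_plus {A} (f g : A -> R) l : lsum (fun a => f a + g a) l = lsum f l + lsum g l.
Proof. induction l; simpl; lra. Qed.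

Lemma lsum_scal {A} (f : A -> R) c l : lsum (fun a => c * f a) l = c * lsum f l.
Proof. induction l; simpl; [lra|]. rewrite IHl; lra. Qed.

Lemma lsum_exch {A B} (F : A -> B -> R) l1 l2 :
  lsum (fun a => lsum (fun b => F a b) l2) l1 = lsum (fun b => lsum (fun a => F a b) l1) l2.
Proof.
  induction l1; simpl.
  - induction l2; simpl; lra.
  - rewrite IHl1. rewrite <- lsum_plus. reflexivity.
Qed.

Lemma lsum_map {A B} (f : B -> R) (h : A -> B) l : lsum f (map h l) = lsum (fun a => f (h a)) l.
Proof. induction l; simpl; congruence. Qed.

Lemma lsum_const1 {A} (f : A -> R) l : (forall a, In a l -> f a <= 1) -> lsum f l <= INR (length l).
Proof. induction l; intros; [simpl; lra|]. unfold lsum in *; cbn [fold_right length] in *; fold (lsum f l) in *. rewrite S_INR. assert (f a <= 1) by (apply H; simpl; auto). assert (lsum f l <= INR (length l)) by (apply IHl; intros; apply H; simpl; auto). lra. Qed.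

Lemma lsum_drop {A} (f : A -> R) l y : In y l -> (forall a, In a l -> f a <= 1) ->
  lsum f l <= INR (length l) - 1 + f y.
Proof.
  induction l; intros Hin H; [contradiction|]. unfold lsum in *; cbn [fold_right length] in *; fold (lsum f l) in *. rewrite S_INR.
  destruct Hin as [<-|Hin].
  - pose proof (lsum_const1 f l (fun a h => H a (or_intror h))). lra.
  - assert (f a <= 1) by (apply H; simpl; auto). assert (lsum f l <= INR (length l) - 1 + f y) by (apply IHl; auto; intros; apply H; simpl; auto). lra.
Qed.

Lemma lsum_nonneg {A} (f : A -> R) l : (forall a, In a l -> 0 <= f a) -> 0 <= lsum f l.
Proof. induction l; simpl; intros; [lra|]. assert (0 <= f a) by auto. assert (0 <= lsum f l) by auto. lra. Qed.

Fixpoint fsum (g : nat -> R) (n : nat) : R :=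
  match n with O => 0 | S n' => g O + fsum (fun k => g (S k)) n' end.

Lemma fsum_S g n : fsum g (S n) = fsum g n + g n.
Proof. revert g; induction n; intros g; simpl; [lra|]. simpl in IHn. rewrite (IHn (fun k => g (S k))). lra. Qed.

Lemma fsum_sum_f g n : sum_f_R0 g n = fsum g (S n).
Proof. induction n; [simpl; lra|]. rewrite (fsum_S g (S n)), <- IHn. reflexivity. Qed.

Lemma fsum_zero g n : (forall k, (k < n)%nat -> g k = 0) -> fsum g n = 0.
Proof. induction n; intros H; [simpl; lra|]. rewrite fsum_S, IHn, H; try lra; try lia; intros; apply H; lia. Qed.

Lemma fsum_tail g N n : (forall k, (N <= k)%nat -> g k = 0) -> (N <= n)%nat -> fsum g n = fsum g N.
Proof. intros H Hn; induction Hn as [|m Hm IH]; [reflexivity|]. rewrite fsum_S, IH, H; [lra|lia]. Qed.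

Lemma inf_sum_tail g N : (forall k, (N <= k)%nat -> g k = 0) -> infinite_sum g (fsum g N).
Proof.
  intros H eps Heps. exists N. intros n Hn. rewrite fsum_sum_f.
  rewrite (fsum_tail g N (S n)); auto. unfold Rdist. rewrite Rminus_diag, Rabs_R0; lra.
Qed.

Lemma lsum_fsum {A} (phi : A -> R) l d : lsum phi l = fsum (fun n => phi (nth n l d)) (length l).
Proof. induction l; simpl; [lra|]. rewrite IHl. reflexivity. Qed.

Lemma inf_sum_plus s t a b : infinite_sum s a -> infinite_sum t b -> infinite_sum (fun n => s n + t n) (a + b).
Proof.
  intros Hs Ht eps He. destruct (Hs (eps/2)) as [N1 H1]; [lra|]. destruct (Ht (eps/2)) as [N2 H2]; [lra|].
  exists (max N1 N2). intros n Hn. rewrite plus_sum. specialize (H1 n ltac:(lia)). specialize (H2 n ltac:(lia)).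
  unfold Rdist in *. replace (sum_f_R0 s n + sum_f_R0 t n - (a + b)) with ((sum_f_R0 s n - a) + (sum_f_R0 t n - b)) by ring.
  eapply Rle_lt_trans; [apply Rabs_triang|]. lra.
Qed.

Lemma inf_sum_scal s a c : infinite_sum s a -> infinite_sum (fun n => s n * c) (a * c).
Proof.
  intros Hs eps He. destruct (Hs (eps / (Rabs c + 1))) as [N H1].
  { apply Rdiv_lt_0_compat; [lra|]. pose proof (Rabs_pos c); lra. }
  exists N. intros n Hn. rewrite <- scal_sum. specialize (H1 n Hn). unfold Rdist in *.
  replace (c * sum_f_R0 s n - a * c) with ((sum_f_R0 s n - a) * c) by ring.
  rewrite Rabs_mult. pose proof (Rabs_pos c). pose proof (Rabs_pos (sum_f_R0 s n - a)).
  apply Rle_lt_trans with (Rabs (sum_f_R0 s n - a) * (Rabs c + 1)); [nra|].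
  apply Rlt_le_trans with (eps / (Rabs c + 1) * (Rabs c + 1)).
  - apply Rmult_lt_compat_r; lra.
  - right. field. lra.
Qed.

Lemma inf_sum_lsum {A} (F : nat -> A -> R) (L : A -> R) l :
  (forall a, infinite_sum (fun n => F n a) (L a)) -> infinite_sum (fun n => lsum (F n) l) (lsum L l).
Proof.
  intro H. induction l; simpl.
  - replace 0 with (fsum (fun _ => 0) 0) by reflexivity. apply inf_sum_tail. auto.
  - apply inf_sum_plus; auto.
Qed.

Lemma inf_sum_const0 c l : infinite_sum (fun _ => c) l -> l = c -> c = 0.
Proof.
  intros H ->. destruct (Req_dec c 0) as [|Hc]; auto. exfalso.
  assert (Ha : 0 < Rabs c / 2) by (pose proof (Rabs_pos_lt c Hc); lra).
  destruct (H _ Ha) as [N HN]. specialize (HN (S N) ltac:(lia)). rewrite sum_cte in HN.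
  unfold Rdist in HN. replace (c * INR (S (S N)) - c) with (c * INR (S N)) in HN by (rewrite (S_INR (S N)); ring).
  rewrite Rabs_mult, (Rabs_right (INR (S N))) in HN by (apply Rle_ge, pos_INR).
  pose proof (Rabs_pos_lt c Hc). assert (1 <= INR (S N)) by (rewrite S_INR; pose proof (pos_INR N); lra). nra.
Qed.

Section Meas.
Context {X : Type} (op : (X -> Prop) -> Prop).

Lemma borel_open U : op U -> borel op U.
Proof. intros HU S HS Ho. auto. Qed.
Lemma borel_compl A : borel op A -> borel op (fun x => ~ A x).
Proof. intros HA S HS Ho. pose proof HS as (_ & Hc & _). apply Hc. apply HA; auto. Qed.
Lemma borel_True : borel op (fun _ => True).
Proof. intros S HS Ho. apply HS. Qed.
Lemma borel_ext A B : (forall x, A x <-> B x) -> borel op A -> borel op B.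
Proof. intros H; rewrite (set_ext A B H); auto. Qed.

Definition d0 : R * (X -> Prop) := (0, fun _ => False).
Definition Disj (l : list (R * (X -> Prop))) : Prop :=
  forall (i j : nat) x, i <> j -> (i < length l)%nat -> (j < length l)%nat ->
        snd (nth i l d0) x -> snd (nth j l d0) x -> False.

Lemma Disj_tail p l : Disj (p :: l) -> Disj l.
Proof. intros H i j x Hij Hi Hj Hx Hy. apply (H (S i) (S j) x); simpl; auto; lia. Qed.

Lemma Disj_head p l y : Disj (p :: l) -> snd p y -> forall q, In q l -> ~ snd q y.
Proof.
  intros H Hp q Hq Hqy. destruct (In_nth l q d0 Hq) as (j & Hj & <-).
  apply (H 0%nat (S j) y); simpl; auto; lia.
Qed.

Lemma pt_sum_zero (l : list (R * (X -> Prop))) y :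
  (forall q, In q l -> ~ snd q y) -> lsum (fun p => fst p * indic (snd p y)) l = 0.
Proof.
  induction l; intros H; simpl; [lra|]. rewrite indic_F by (apply H; simpl; auto). rewrite IHl; [lra|].
  intros; apply H; simpl; auto.
Qed.

Lemma pt_sum_le (l : list (R * (X -> Prop))) (f : X -> R) y :
  Disj l -> (forall p x, In p l -> snd p x -> fst p <= f x) -> (exists p, In p l /\ snd p y) ->
  lsum (fun p => fst p * indic (snd p y)) l <= f y.
Proof.
  induction l as [|a l IH]; intros HD Hlb [p [Hp Hpy]]; [contradiction|]. simpl.
  destruct (classic (snd a y)) as [Ha|Ha].
  - rewrite indic_T by auto. rewrite pt_sum_zero by (eapply Disj_head; eauto).
    assert (fst a <= f y) by (apply Hlb; simpl; auto). lra.
  - rewrite indic_F by auto. destruct Hp as [<-|Hp]; [contradiction|].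
    assert (lsum (fun p => fst p * indic (snd p y)) l <= f y).
    { apply IH; eauto using Disj_tail. intros; apply Hlb; simpl; auto. }
    lra.
Qed.

Definition mix (ys : list X) (A : X -> Prop) : R := lsum (fun y => indic (A y)) ys / INR (length ys).

Lemma mix_push (h : X -> X) ys : push h (mix ys) = mix (map h ys).
Proof.
  apply functional_extensionality; intro A. unfold push, mix. rewrite length_map, lsum_map. reflexivity.
Qed.

Lemma indic_series (A : nat -> X -> Prop) y :
  (forall n m x, n <> m -> A n x -> A m x -> False) ->
  infinite_sum (fun n => indic (A n y)) (indic (exists n, A n y)).
Proof.
  intros HD. destruct (classic (exists n, A n y)) as [[n0 Hn0]|Hn].
  - rewrite indic_T by eauto.
    assert (Hz : forall k, k <> n0 -> indic (A k y) = 0).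
    { intros k Hk. apply indic_F. intro Hk'. eapply HD; eauto. }
    replace 1 with (fsum (fun n => indic (A n y)) (S n0)).
    + apply inf_sum_tail. intros k Hk; apply Hz; lia.
    + rewrite fsum_S, fsum_zero, indic_T; auto; try lra. intros k Hk; apply Hz; lia.
  - rewrite indic_F by auto. replace 0 with (fsum (fun n => indic (A n y)) 0) by reflexivity.
    apply inf_sum_tail. intros k _. apply indic_F. intro; apply Hn; eauto.
Qed.

Lemma mix_prob ys : ys <> nil -> prob_measure op (mix ys).
Proof.
  intros Hne. assert (HN : 0 < INR (length ys)).
  { destruct ys; [congruence|]. simpl length. apply lt_0_INR; lia. }
  split; [|split].
  - intros A _. unfold mix. apply Rmult_le_pos; [apply lsum_nonneg; intros; apply indic_01|left; apply Rinv_0_lt_compat; auto].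
  - unfold mix. rewrite (lsum_ext _ (fun _ => 1)) by (intros; apply indic_T; auto).
    replace (lsum (fun _ : X => 1) ys) with (INR (length ys)).
    + field. lra.
    + clear. induction ys; simpl lsum; [simpl; lra|]. cbn [length]. rewrite S_INR, IHys. unfold lsum; simpl; lra.
  - intros A _ HD. unfold mix. unfold Rdiv. apply inf_sum_scal. apply inf_sum_lsum. intro y. apply indic_series; auto.
Qed.

Lemma mix_lower ys f s : ys <> nil -> lower_sum op (mix ys) f s -> s <= lsum f ys / INR (length ys).
Proof.
  intros Hne (l & _ & Hcov & HD & Hlb & ->).
  assert (HN : 0 < INR (length ys)).
  { destruct ys; [congruence|]. simpl length. apply lt_0_INR; lia. }
  change (fold_right (fun p acc => fst p * mix ys (snd p) + acc) 0 l) with (lsum (fun p => fst p * mix ys (snd p)) l).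
  rewrite (lsum_ext _ (fun p => / INR (length ys) * lsum (fun y => fst p * indic (snd p y)) ys)).
  2:{ intros p _. unfold mix. rewrite lsum_scal. field. lra. }
  rewrite lsum_scal, lsum_exch. unfold Rdiv. rewrite Rmult_comm. apply Rmult_le_compat_r.
  - left; apply Rinv_0_lt_compat; auto.
  - apply lsum_le. intros y _. apply pt_sum_le; auto.
Qed.

Lemma prob_empty mu : prob_measure op mu -> mu (fun _ => False) = 0.
Proof.
  intros (_ & _ & Hadd). pose proof (Hadd (fun _ _ => False)) as H.
  assert (Hb : forall n : nat, borel op (fun _ : X => False)).
  { intros n S HS Ho. destruct HS as (HT & Hc & _). 
    replace (fun _ : X => False) with (fun x : X => ~ (fun _ : X => True) x) by (apply set_ext; tauto). auto. }
  specialize (H Hb ltac:(tauto)). rewrite (set_ext (fun x => exists n : nat, False) (fun _ => False)) in H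
    by (intros; split; [intros [_ []]|tauto]).
  eapply inf_sum_const0; eauto.
Qed.

Lemma prob_fin_add mu l : prob_measure op mu -> (forall p, In p l -> borel op (snd p)) ->
  (forall x, exists p, In p l /\ snd p x) -> Disj l ->
  lsum (fun p => mu (snd p)) l = 1.
Proof.
  intros Hmu Hb Hcov HD. pose proof Hmu as (_ & H1 & Hadd).
  set (B := fun n => snd (nth n l d0)).
  assert (HB : forall n, borel op (B n)).
  { intro n. unfold B. destruct (Nat.lt_ge_cases n (length l)) as [Hn|Hn].
    - apply Hb, nth_In; auto.
    - rewrite nth_overflow by auto. simpl. intros S HS Ho. destruct HS as (HT & Hc & _).
      replace (fun _ : X => False) with (fun x : X => ~ (fun _ : X => True) x) by (apply set_ext; tauto). auto. }
  assert (HDB : forall n m x, n <> m -> B n x -> B m x -> False).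
  { intros n m x Hnm Hn Hm. unfold B in *.
    destruct (Nat.lt_ge_cases n (length l)) as [Hn'|Hn']; [|rewrite nth_overflow in Hn by auto; exact Hn].
    destruct (Nat.lt_ge_cases m (length l)) as [Hm'|Hm']; [|rewrite nth_overflow in Hm by auto; exact Hm].
    eapply HD; eauto. }
  specialize (Hadd B HB HDB).
  rewrite (set_ext (fun x => exists n, B n x) (fun _ => True)) in Hadd.
  2:{ intro x; split; auto. intros _. destruct (Hcov x) as (p & Hp & Hpx).
      destruct (In_nth l p d0 Hp) as (j & Hj & Hjp). exists j. unfold B. rewrite Hjp. auto. }
  rewrite H1 in Hadd.
  assert (Ht : infinite_sum (fun n => mu (B n)) (fsum (fun n => mu (B n)) (length l))).
  { apply inf_sum_tail. intros k Hk. unfold B. rewrite nth_overflow by auto. simpl. apply prob_empty; auto. }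
  rewrite (lsum_fsum _ l d0). eapply uniqueness_sum; eauto.
Qed.

Lemma prob_lower mu f s : prob_measure op mu -> (forall x, f x <= 1) -> lower_sum op mu f s -> s <= 1.
Proof.
  intros Hmu Hf (l & Hb & Hcov & HD & Hlb & ->).
  change (fold_right (fun p acc => fst p * mu (snd p) + acc) 0 l) with (lsum (fun p => fst p * mu (snd p)) l).
  rewrite <- (prob_fin_add mu l Hmu Hb Hcov HD). apply lsum_le. intros p Hp.
  destruct (classic (exists x, snd p x)) as [[x Hx]|Hn].
  - assert (fst p <= 1) by (specialize (Hlb p x Hp Hx); specialize (Hf x); lra).
    pose proof (proj1 Hmu (snd p) (Hb p Hp)). nra.
  - rewrite (set_ext (snd p) (fun _ => False)) by (intro x; split; [intro; apply Hn; eauto|tauto]).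
    rewrite prob_empty; auto; lra.
Qed.

Lemma integral_exists mu f B : (forall x, 0 <= f x) -> (forall s, lower_sum op mu f s -> s <= B) ->
  exists v, integral_is op mu f v /\ v <= B.
Proof.
  intros Hf HB.
  assert (Hne : exists s, lower_sum op mu f s).
  { exists (0 * mu (fun _ => True) + 0). exists ((0, fun _ => True) :: nil). repeat split.
    - intros p [<-|[]]. apply borel_True.
    - intros x. exists (0, fun _ : X => True). simpl; auto.
    - intros i j x Hij Hi Hj. simpl in Hi, Hj. lia.
    - intros p x [<-|[]] _. simpl. apply Hf. }
  destruct (completeness (lower_sum op mu f)) as [v Hv].
  - exists B. intros s Hs. auto.
  - auto.
  - exists v. split; auto. apply Hv. intros s Hs; auto.
Qed.

Lemma dirac_lower z f a : (forall x, 0 <= f x) -> a <= f z -> continuous_real op f ->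
  (forall U, op U -> borel op U) ->
  (op (fun x => f x < a)) -> lower_sum op (mix (z :: nil)) f a.
Proof.
  intros Hf Ha Hc _ Ho.
  exists ((a, fun x => a <= f x) :: (0, fun x => f x < a) :: nil). repeat split.
  - intros p [<-|[<-|[]]]; simpl.
    + apply (borel_ext (fun x => ~ (fun x => f x < a) x)). { intro; lra. } apply borel_compl, borel_open; auto.
    + apply borel_open; auto.
  - intro x. destruct (Rle_lt_dec a (f x)).
    + exists (a, fun x => a <= f x); simpl; auto.
    + exists (0, fun x => f x < a); simpl; auto.
  - intros i j x Hij Hi Hj. simpl in Hi, Hj.
    destruct i as [|[|i]]; destruct j as [|[|j]]; simpl; try lia; lra.
  - intros p x [<-|[<-|[]]]; simpl; auto.
  - simpl. unfold mix. simpl. rewrite (indic_T (a <= f z)) by auto. rewrite indic_F by lra. field.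
Qed.

End Meas.

Section Topo.
Context {X : Type} (op : (X -> Prop) -> Prop) (Htop : is_topology X op)
  (Hcpt : compact_sp op) (Hhaus : hausdorff_sp op).

Definition cl (A : X -> Prop) (x : X) : Prop := forall U, op U -> U x -> exists y, U y /\ A y.

Lemma sub_cl A x : A x -> cl A x.
Proof. intros Hx U _ HU. eauto. Qed.

Lemma op_ext A B : (forall x, A x <-> B x) -> op A -> op B.
Proof. intro H; rewrite (set_ext A B H); auto. Qed.

Lemma op_True : op (fun _ => True).
Proof. apply Htop. Qed.

Lemma op_inter A B : op A -> op B -> op (fun x => A x /\ B x).
Proof. apply Htop. Qed.

Lemma ncl_nbhd A z : ~ cl A z -> exists N, op N /\ N z /\ forall q, N q -> ~ A q.
Proof.
  intro H. apply not_all_ex_not in H as [N HN]. exists N.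
  apply imply_to_and in HN as [HoN HN]. apply imply_to_and in HN as [HzN HN].
  repeat split; auto. intros q Hq Hq'. apply HN; eauto.
Qed.

Lemma op_ncl A : op (fun x => ~ cl A x).
Proof.
  apply (op_ext (fun x => exists U, (op U /\ forall q, U q -> ~ cl A q) /\ U x)).
  - intro x; split.
    + intros (U & (HU & HU') & Hx). auto.
    + intro H. destruct (ncl_nbhd A x H) as (N & HN & Hx & Hd). exists N. repeat split; auto.
      intros q Hq Hc. destruct (Hc N HN Hq) as (r & Hr & Hr'). eapply Hd; eauto.
  - apply Htop. intros U [HU _]; auto.
Qed.

Lemma op_cond (P : Prop) (W : X -> Prop) : (P -> op W) -> op (fun z => P -> W z).
Proof.
  intro H. destruct (classic P) as [HP|HP].
  - apply (op_ext W); [intro; tauto|auto].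
  - apply (op_ext (fun _ => True)); [intro; tauto|apply op_True].
Qed.

Lemma op_finter {I : Type} (l : list I) (P : I -> Prop) (W : I -> X -> Prop) :
  (forall i, P i -> op (W i)) -> op (fun z => forall i, In i l -> P i -> W i z).
Proof.
  intro H. induction l as [|a l IH].
  - apply (op_ext (fun _ => True)); [intro; simpl; tauto|apply op_True].
  - apply (op_ext (fun z => (P a -> W a z) /\ (forall i, In i l -> P i -> W i z))).
    + intro z; simpl; split.
      * intros [H1 H2] i [<-|Hi]; auto.
      * intros H'; split; auto.
    + apply op_inter; auto. apply op_cond; auto.
Qed.

Lemma op_funion {I : Type} (l : list I) (P : I -> Prop) (W : I -> X -> Prop) :
  (forall i, P i -> op (W i)) -> op (fun z => exists i, In i l /\ P i /\ W i z).
Proof.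
  intro H. apply (op_ext (fun z => exists U, (exists i, In i l /\ P i /\ U = W i) /\ U z)).
  - intro z; split.
    + intros (U & (i & Hi & HP & ->) & Hz); eauto.
    + intros (i & Hi & HP & Hz). exists (W i); eauto.
  - apply Htop. intros U (i & _ & HP & ->); auto.
Qed.

Lemma sepA x O : op O -> O x -> exists P, op P /\ P x /\ forall z, cl P z -> O z.
Proof.
  intros HO Hx.
  assert (Hch : forall y, exists UV : (X -> Prop) * (X -> Prop), y <> x ->
    op (fst UV) /\ op (snd UV) /\ fst UV x /\ snd UV y /\ forall z, fst UV z -> snd UV z -> False).
  { intro y. destruct (classic (y = x)) as [->|Hy].
    - exists (O, O). tauto.
    - destruct (Hhaus x y (fun e => Hy (eq_sym e))) as (U & V & HU & HV & Hux & Hvy & Hd).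
      exists (U, V). intros _. auto. }
  destruct (choice _ Hch) as [UV HUV].
  set (C := fun y z => (O y -> O z) /\ (~ O y -> snd (UV y) z)).
  destruct (Hcpt X C) as [l Hl].
  { intro y. unfold C. apply op_inter.
    - apply op_cond; auto.
    - apply op_cond. intro Hy. apply HUV. intro; subst; auto. }
  { intro y. exists y. unfold C. split; auto. intro Hy. apply HUV. intro; subst; auto. }
  exists (fun z => forall y, In y l -> ~ O y -> fst (UV y) z). split; [|split].
  - apply op_finter. intros y Hy. apply HUV. intro; subst; auto.
  - intros y _ Hy. apply HUV. intro; subst; auto.
  - intros z Hz. apply NNPP. intro Hnz. destruct (Hl z) as (y & Hy & [H1 H2]).
    destruct (classic (O y)) as [HOy|HOy]; [auto|].
    assert (Hyx : y <> x) by (intro; subst; auto).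
    destruct (HUV y Hyx) as (_ & HV & _ & _ & Hd).
    destruct (Hz _ HV (H2 HOy)) as (q & Hq1 & Hq2). apply (Hd q); auto.
Qed.

Lemma sepB A B : op A -> op B -> (forall z, cl A z -> B z) ->
  exists C, op C /\ (forall z, cl A z -> C z) /\ (forall z, cl C z -> B z).
Proof.
  intros HA HB HAB. set (K := cl A).
  assert (Hch : forall k, exists P, K k -> op P /\ P k /\ forall z, cl P z -> B z).
  { intro k. destruct (classic (K k)) as [Hk|Hk].
    - destruct (sepA k B HB (HAB k Hk)) as (P & HP). exists P; auto.
    - exists B; tauto. }
  destruct (choice _ Hch) as [P HP].
  set (C' := fun k z => (K k -> P k z) /\ (~ K k -> ~ K z)).
  destruct (Hcpt X C') as [l Hl].
  { intro k. unfold C'. apply op_inter; apply op_cond.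
    - intro Hk; apply HP; auto.
    - intros _. apply op_ncl. }
  { intro k. exists k. unfold C'. split; auto. intro Hk. apply HP; auto. }
  exists (fun z => exists k, In k l /\ K k /\ P k z). split; [|split].
  - apply op_funion. intros; apply HP; auto.
  - intros z Hz. destruct (Hl z) as (k & Hk & [H1 H2]).
    destruct (classic (K k)) as [HKk|HKk]; [eauto|]. exfalso; apply (H2 HKk); auto.
  - intros z Hz. apply NNPP. intro Hnz.
    assert (Hind : forall l', (forall k, In k l' -> K k -> ~ cl (P k) z) ->
      exists N, op N /\ N z /\ forall q, N q -> ~ (exists k, In k l' /\ K k /\ P k q)).
    { induction l' as [|a l' IH]; intros Hl'.
      - exists (fun _ => True). split; [apply op_True|]. split; auto. intros q _ (k & [] & _).
      - destruct IH as (N1 & HN1 & Hz1 & Hd1). { intros; apply Hl'; simpl; auto. }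
        destruct (classic (K a)) as [HKa|HKa].
        + destruct (ncl_nbhd (P a) z (Hl' a (or_introl eq_refl) HKa)) as (N2 & HN2 & Hz2 & Hd2).
          exists (fun q => N1 q /\ N2 q). split; [apply op_inter; auto|]. split; auto.
          intros q [Hq1 Hq2] (k & [<-|Hk] & HKk & HPk); [eapply Hd2; eauto|]. apply (Hd1 q Hq1); eauto.
        + exists N1. split; auto. split; auto. intros q Hq (k & [<-|Hk] & HKk & HPk); [auto|].
          apply (Hd1 q Hq); eauto. }
    destruct (Hind l) as (N & HN & HzN & Hd).
    { intros k _ HKk Hc. apply Hnz. apply (HP k HKk); auto. }
    destruct (Hz N HN HzN) as (q & Hq & Hq'). eapply Hd; eauto.
Qed.

End Topo.

Lemma ex_least (P : nat -> Prop) : (exists n, P n) -> exists n, P n /\ forall j, (j < n)%nat -> ~ P j.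
Proof.
  intros [n Hn]. revert Hn. induction n as [n IH] using lt_wf_ind. intro Hn.
  destruct (classic (exists j, (j < n)%nat /\ P j)) as [(j & Hj & HPj)|Hno].
  - apply (IH j Hj HPj).
  - exists n. split; auto. intros j Hj HPj. apply Hno; eauto.
Qed.

Lemma pow2pos m : (0 < 2 ^ m)%nat.
Proof. induction m; simpl; lia. Qed.

Lemma INR_pow2pos m : 0 < INR (2 ^ m).
Proof. apply lt_0_INR, pow2pos. Qed.

Lemma even_double a : Nat.even (2 * a) = true.
Proof. apply Nat.even_spec. exists a. reflexivity. Qed.
Lemma even_sdouble a : Nat.even (S (2 * a)) = false.
Proof. rewrite Nat.even_succ, <- Nat.negb_even, even_double. reflexivity. Qed.

Section Ury.
Context {X : Type} (op : (X -> Prop) -> Prop) (Htop : is_topology X op)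
  (Hcpt : compact_sp op) (Hhaus : hausdorff_sp op).

Definition mid (A B : X -> Prop) : X -> Prop :=
  epsilon (inhabits (fun _ : X => True))
    (fun C => op C /\ (forall z, cl op A z -> C z) /\ (forall z, cl op C z -> B z)).

Lemma mid_spec A B : op A -> op B -> (forall z, cl op A z -> B z) ->
  op (mid A B) /\ (forall z, cl op A z -> mid A B z) /\ (forall z, cl op (mid A B) z -> B z).
Proof.
  intros HA HB HAB. unfold mid. apply epsilon_spec. apply sepB; auto.
Qed.

Variables (A0 B0 : X -> Prop).
Hypotheses (HA0 : op A0) (HB0 : op B0) (HAB0 : forall z, cl op A0 z -> B0 z).

Fixpoint Ul (m k : nat) : X -> Prop :=
  match m with
  | O => match k with O => A0 | S _ => B0 end
  | S m' => if Nat.even k then Ul m' (Nat.div2 k) else mid (Ul m' (Nat.div2 k)) (Ul m' (S (Nat.div2 k)))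
  end.

Lemma Ul_even m a : Ul (S m) (2 * a) = Ul m a.
Proof. cbn [Ul]. rewrite even_double, Nat.div2_double. reflexivity. Qed.
Lemma Ul_odd m a : Ul (S m) (S (2 * a)) = mid (Ul m a) (Ul m (S a)).
Proof. cbn [Ul]. rewrite even_sdouble, Nat.div2_succ_double. reflexivity. Qed.

Lemma Ul_inv m : (forall k, (k <= 2 ^ m)%nat -> op (Ul m k)) /\
  (forall k, (k < 2 ^ m)%nat -> forall z, cl op (Ul m k) z -> Ul m (S k) z).
Proof.
  induction m as [|m [IH1 IH2]].
  - simpl. split.
    + intros [|[|k]] Hk; auto; lia.
    + intros [|k] Hk; [auto|lia].
  - assert (Hp : (2 ^ S m = 2 * 2 ^ m)%nat) by (simpl; lia). rewrite Hp. split.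
    + intros k Hk. destruct (Nat.Even_or_Odd k) as [[a ->]|[a ->]].
      * rewrite Ul_even. apply IH1. lia.
      * replace (2 * a + 1)%nat with (S (2 * a)) by lia. rewrite Ul_odd.
        apply mid_spec; [apply IH1; lia|apply IH1; lia|apply IH2; lia].
    + intros k Hk. destruct (Nat.Even_or_Odd k) as [[a ->]|[a ->]].
      * rewrite Ul_even, Ul_odd. apply mid_spec; [apply IH1; lia|apply IH1; lia|apply IH2; lia].
      * replace (2 * a + 1)%nat with (S (2 * a)) by lia. rewrite Ul_odd.
        replace (S (S (2 * a))) with (2 * S a)%nat by lia. rewrite Ul_even.
        apply mid_spec; [apply IH1; lia|apply IH1; lia|apply IH2; lia].
Qed.

Lemma Ul_top m : Ul m (2 ^ m) = B0.
Proof.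
  induction m; [reflexivity|]. replace (2 ^ S m)%nat with (2 * 2 ^ m)%nat by (simpl; lia).
  rewrite Ul_even; auto.
Qed.

Lemma Ul_bot m : Ul m 0 = A0.
Proof. induction m; [reflexivity|]. replace 0%nat with (2 * 0)%nat by lia. rewrite Ul_even; auto. Qed.

Lemma Ul_cons m j k : Ul (m + j) (k * 2 ^ j) = Ul m k.
Proof.
  induction j.
  - rewrite Nat.add_0_r. simpl. rewrite Nat.mul_1_r. reflexivity.
  - rewrite Nat.add_succ_r. replace (k * 2 ^ S j)%nat with (2 * (k * 2 ^ j))%nat by (simpl; ring).
    rewrite Ul_even; auto.
Qed.

Definition Uf (m k : nat) : X -> Prop := if Nat.leb k (2 ^ m) then Ul m k else (fun _ => True).

Lemma Uf_op m k : op (Uf m k).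
Proof. unfold Uf. destruct (Nat.leb_spec k (2 ^ m)) as [Hk|Hk]. - apply Ul_inv; auto. - apply Htop. Qed.

Lemma Uf_adj m k z : cl op (Uf m k) z -> Uf m (S k) z.
Proof.
  unfold Uf. destruct (Nat.leb_spec (S k) (2 ^ m)); [|auto].
  destruct (Nat.leb_spec k (2 ^ m)); [|lia]. apply Ul_inv; lia.
Qed.

Lemma Uf_mono m k k' z : (k <= k')%nat -> Uf m k z -> Uf m k' z.
Proof. induction 1 as [|k2 Hk2 IH]; auto. intro Hz. apply Uf_adj, sub_cl; auto. Qed.

Lemma Uf_cons m j k : Uf (m + j) (k * 2 ^ j) = Uf m k.
Proof.
  unfold Uf. rewrite Ul_cons. pose proof (pow2pos j). rewrite Nat.pow_add_r.
  destruct (Nat.leb_spec (k * 2 ^ j) (2 ^ m * 2 ^ j)); destruct (Nat.leb_spec k (2 ^ m)); auto; nia.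
Qed.

Lemma Uf_bot m : Uf m 0 = A0.
Proof. unfold Uf. simpl. apply Ul_bot. Qed.

Lemma Uf_top m : Uf m (2 ^ m) = B0.
Proof. unfold Uf. rewrite Nat.leb_refl. apply Ul_top. Qed.

Definition gT (x : X) (r : R) : Prop :=
  r = 0 \/ exists m k, Uf m k x /\ r = 1 - INR k / INR (2 ^ m).

Lemma gT_le1 x r : gT x r -> r <= 1.
Proof.
  intros [->|(m & k & _ & ->)]; [lra|]. pose proof (pos_INR k). pose proof (INR_pow2pos m).
  assert (0 <= INR k / INR (2 ^ m)) by (apply Rmult_le_pos; [lra|left; apply Rinv_0_lt_compat; lra]). lra.
Qed.

Lemma gT_bound x : bound (gT x).
Proof. exists 1. intros r Hr. apply (gT_le1 x r Hr). Qed.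
Lemma gT_ne x : exists r, gT x r.
Proof. exists 0. left; auto. Qed.

Definition gfun (x : X) : R := proj1_sig (completeness (gT x) (gT_bound x) (gT_ne x)).
Lemma g_lub x : is_lub (gT x) (gfun x).
Proof. unfold gfun. destruct completeness; auto. Qed.

Lemma g_P1 m k x : Uf m k x -> 1 - INR k / INR (2 ^ m) <= gfun x.
Proof. intro H. apply (proj1 (g_lub x)). right; eauto. Qed.

Lemma g_P0 x : 0 <= gfun x <= 1.
Proof. split. - apply (proj1 (g_lub x)). left; auto. - apply (proj2 (g_lub x)). intros r Hr; apply (gT_le1 x r Hr). Qed.

Lemma g_P2 m k x : ~ Uf m k x -> gfun x <= 1 - INR k / INR (2 ^ m).
Proof.
  intro H. apply (proj2 (g_lub x)). intros r [->|(m' & k' & Hx & ->)].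
  - assert (Hk : (k <= 2 ^ m)%nat).
    { unfold Uf in H. destruct (Nat.leb_spec k (2 ^ m)); auto. exfalso; apply H; auto. }
    apply le_INR in Hk. pose proof (INR_pow2pos m).
    assert (INR k / INR (2 ^ m) <= 1). { apply (Rmult_le_reg_r (INR (2 ^ m))); auto. field_simplify; lra. }
    lra.
  - destruct (Rle_lt_dec (INR k / INR (2 ^ m)) (INR k' / INR (2 ^ m'))) as [Hle|Hlt]; [lra|].
    exfalso. apply H. pose proof (INR_pow2pos m). pose proof (INR_pow2pos m').
    assert (Hn : (k' * 2 ^ m < k * 2 ^ m')%nat).
    { apply INR_lt. rewrite !mult_INR.
      set (u := INR k' / INR (2 ^ m')) in *. set (v := INR k / INR (2 ^ m)) in *.
      assert (E1 : INR k' = u * INR (2 ^ m')) by (unfold u; field; lra).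
      assert (E2 : INR k = v * INR (2 ^ m)) by (unfold v; field; lra).
      rewrite E1, E2. assert (0 < INR (2 ^ m) * INR (2 ^ m')) by (apply Rmult_lt_0_compat; lra).
      assert (0 < (v - u) * (INR (2 ^ m) * INR (2 ^ m'))) by (apply Rmult_lt_0_compat; lra). nra. }
    rewrite <- (Uf_cons m m' k). replace (m + m')%nat with (m' + m)%nat by lia.
    apply (Uf_mono _ (k' * 2 ^ m)); [lia|]. rewrite Uf_cons. auto.
Qed.

Lemma g_cont : continuous_real op gfun.
Proof.
  intros x eps Heps.
  destruct (archimed_cor1 (eps / 2)) as (N & HN & HN0); [lra|].
  set (m := S N).
  assert (Hd : 2 / INR (2 ^ m) < eps).
  { assert (INR N <= INR (2 ^ N)).
    { apply le_INR. clear. induction N; simpl; [lia|]. pose proof (pow2pos N). lia. }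
    unfold m. replace (2 ^ S N)%nat with (2 * 2 ^ N)%nat by (simpl; lia). rewrite mult_INR.
    simpl (INR 2). assert (0 < INR N) by (apply lt_0_INR; auto).
    assert (/ INR (2 ^ N) <= / INR N) by (apply Rinv_le_contravar; auto).
    replace (2 / ((1 + 1) * INR (2 ^ N))) with (/ INR (2 ^ N)) by (field; pose proof (INR_pow2pos N); lra). lra. }
  pose proof (INR_pow2pos m) as Hpm.
  destruct (ex_least (fun k => Uf m k x)) as (k & Hk & Hmin).
  { exists (S (2 ^ m)). unfold Uf. destruct (Nat.leb_spec (S (2 ^ m)) (2 ^ m)); [lia|auto]. }
  assert (Hx1 := g_P1 m k x Hk). assert (Hx0 := g_P0 x).
  destruct (Nat.lt_ge_cases k 2) as [Hk2|Hk2].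
  - exists (Uf m k). split; [apply Uf_op|]. split; auto. intros y Hy.
    pose proof (g_P1 m k y Hy). pose proof (g_P0 y).
    assert (INR k <= 1) by (replace 1 with (INR 1) by reflexivity; apply le_INR; lia).
    assert (INR k / INR (2 ^ m) <= 1 / INR (2 ^ m)) by (unfold Rdiv; apply Rmult_le_compat_r; [left; apply Rinv_0_lt_compat; lra|lra]).
    assert (0 < 1 / INR (2 ^ m)) by (apply Rdiv_lt_0_compat; lra).
    assert (1 / INR (2^m) < 2 / INR (2^m)) by (unfold Rdiv; apply Rmult_lt_compat_r; [apply Rinv_0_lt_compat; lra|lra]).
    apply Rabs_def1; lra.
  - exists (fun y => Uf m k y /\ ~ cl op (Uf m (k - 2)) y). split; [|split].
    + apply Htop; [apply Uf_op|apply op_ncl; auto].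
    + split; auto. intro Hc. apply Uf_adj in Hc. replace (S (k - 2)) with (k - 1)%nat in Hc by lia.
      apply (Hmin (k - 1)%nat); [lia|auto].
    + intros y [Hy Hy'].
      assert (Hx2 : gfun x <= 1 - INR (k - 1) / INR (2 ^ m)) by (apply g_P2; apply Hmin; lia).
      assert (Hy2 : gfun y <= 1 - INR (k - 2) / INR (2 ^ m)) by (apply g_P2; intro; apply Hy'; apply sub_cl; auto).
      pose proof (g_P1 m k y Hy).
      rewrite minus_INR in Hx2, Hy2 by lia. simpl (INR 1) in Hx2. simpl (INR 2) in Hy2.
      assert (E1 : (INR k - 1) / INR (2 ^ m) = INR k / INR (2 ^ m) - 1 / INR (2 ^ m)) by (field; lra).
      assert (E2 : (INR k - (1 + 1)) / INR (2 ^ m) = INR k / INR (2 ^ m) - 2 / INR (2 ^ m)) by (field; lra).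
      rewrite E1 in Hx2. rewrite E2 in Hy2.
      assert (0 < 1 / INR (2 ^ m)) by (apply Rdiv_lt_0_compat; lra).
      apply Rabs_def1; lra.
Qed.

End Ury.


Lemma urysohn {X : Type} (op : (X -> Prop) -> Prop) (Htop : is_topology X op)
  (Hcpt : compact_sp op) (Hhaus : hausdorff_sp op) (w : X) (V : X -> Prop) :
  op V -> V w -> exists f : X -> R, continuous_real op f /\ (forall x, 0 <= f x <= 1) /\
    f w = 1 /\ (forall x, 0 < f x -> V x).
Proof.
  intros HV Hw. destruct (sepA op Htop Hcpt Hhaus w V HV Hw) as (A0 & HA0 & HwA & HAV).
  exists (gfun op A0 V). split; [|split; [|split]].
  - apply g_cont; auto.
  - apply g_P0.
  - pose proof (g_P0 op A0 V w). pose proof (g_P1 op A0 V 0 0 w).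
    rewrite Uf_bot in H0. specialize (H0 HwA). simpl in H0. lra.
  - intros x Hx. apply NNPP. intro Hn. pose proof (g_P2 op Htop Hcpt Hhaus A0 V HA0 HV HAV 0 1 x) as H. change 1%nat with (2 ^ 0)%nat in H at 1. rewrite (Uf_top op A0 V 0) in H.
    specialize (H Hn). simpl in H. lra.
Qed.

Lemma op_gt {X} (op : (X -> Prop) -> Prop) (Htop : is_topology X op) f a :
  continuous_real op f -> op (fun x => a < f x).
Proof.
  intro Hf. apply (op_ext op (fun x => exists V, (op V /\ forall y, V y -> a < f y) /\ V x)).
  - intro x; split.
    + intros (V & (_ & HV) & Hx); auto.
    + intro Hx. destruct (Hf x (f x - a)) as (V & HV & HxV & Hd); [lra|].
      exists V. split; auto. split; auto. intros y Hy. specialize (Hd y Hy). apply Rabs_def2 in Hd. lra.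
  - apply Htop. intros V [HV _]; auto.
Qed.

Lemma op_lt {X} (op : (X -> Prop) -> Prop) (Htop : is_topology X op) f a :
  continuous_real op f -> op (fun x => f x < a).
Proof.
  intro Hf. apply (op_ext op (fun x => exists V, (op V /\ forall y, V y -> f y < a) /\ V x)).
  - intro x; split.
    + intros (V & (_ & HV) & Hx); auto.
    + intro Hx. destruct (Hf x (a - f x)) as (V & HV & HxV & Hd); [lra|].
      exists V. split; auto. split; auto. intros y Hy. specialize (Hd y Hy). apply Rabs_def2 in Hd. lra.
  - apply Htop. intros V [HV _]; auto.
Qed.

Section Main.
Context (G : Type) (mul : G -> G -> G) (inv : G -> G) (e : G)
  (X : Type) (op : (X -> Prop) -> Prop) (act : G -> X -> X)
  (HG : is_group G mul inv e)
  (Htop : is_topology X op) (Hcpt : compact_sp op) (Hhaus : hausdorff_sp op)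
  (Hact : is_action mul e op act).

Lemma act_mul g h x : act (mul g h) x = act g (act h x).
Proof. apply Hact. Qed.
Lemma act_e x : act e x = x.
Proof. apply Hact. Qed.
Lemma act_cont g U : op U -> op (fun x => U (act g x)).
Proof. intro HU. apply (proj2 (proj2 Hact) g U HU). Qed.
Lemma act_inv_l t x : act (inv t) (act t x) = x.
Proof. rewrite <- act_mul, (grp_invl _ _ _ _ HG), act_e. reflexivity. Qed.

Lemma collapse (Hmin : minimal_action op act) (Hsp : strongly_proximal op act)
  (ys : list X) (U : X -> Prop) : ys <> nil -> op U -> (exists y, U y) ->
  exists g, forall y, In y ys -> U (act g y).
Proof.
  intros Hne HU HUne.
  set (N := INR (length ys)).
  assert (HN : 0 < N). { unfold N. destruct ys; [congruence|]. simpl length. apply lt_0_INR; lia. }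
  set (eps := / (4 * N)). assert (Heps : 0 < eps) by (unfold eps; apply Rinv_0_lt_compat; lra).
  set (a := 1 - eps).
  assert (Hch : forall w, exists p : G * (X -> R), U (act (fst p) w) /\ continuous_real op (snd p) /\
     (forall x, 0 <= snd p x <= 1) /\ snd p w = 1 /\ (forall z, 0 < snd p z -> U (act (fst p) z))).
  { intro w. destruct (Hmin w U HU HUne) as [h Hh].
    destruct (urysohn op Htop Hcpt Hhaus w (fun z => U (act h z))) as (f & Hf1 & Hf2 & Hf3 & Hf4); auto.
    { apply act_cont; auto. }
    exists (h, f); simpl; auto. }
  destruct (choice _ Hch) as [HF HHF].
  set (F := fun w => snd (HF w)).
  destruct (Hcpt X (fun w z => a < F w z)) as [ws Hws].
  { intro w. apply op_gt; auto. apply HHF. }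
  { intro x. exists x. unfold F. rewrite (proj1 (proj2 (proj2 (proj2 (HHF x))))). unfold a; lra. }
  assert (Hy0ex : exists y0, In y0 ys) by (destruct ys as [|y1 ys1]; [congruence|exists y1; simpl; auto]).
  destruct Hy0ex as [y0 Hy0].
  destruct (Hsp (mix ys) (mix (y0 :: nil)) (mix_prob op ys Hne) (mix_prob op (y0 :: nil) (fun H => @nil_cons _ y0 nil (eq_sym H))))
    as (D & le & t & Hdir & lam & Hlam & Hc1 & Hc2).
  set (Q := fun w d => exists v, integral_is op lam (F w) v /\
     (forall r, integral_is op (push (act (t d)) (mix ys)) (F w) r -> Rabs (r - v) < eps) /\
     (forall r, integral_is op (push (act (t d)) (mix (y0 :: nil))) (F w) r -> Rabs (r - v) < eps)).
  assert (Hall : forall l, exists d0, forall w, In w l -> forall d, le d0 d -> Q w d).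
  { induction l as [|w l IH].
    - destruct (dir_inh _ _ Hdir) as [d0]. exists d0. intros w [].
    - destruct IH as [d1 Hd1].
      assert (Hf : continuous_real op (F w)) by apply HHF.
      assert (Hf0 : forall x, 0 <= F w x) by (intro; apply HHF).
      destruct (integral_exists op lam (F w) 1 Hf0) as (v & Hv & _).
      { intros s Hs. apply (prob_lower op lam (F w) s Hlam); auto. intro; apply HHF. }
      destruct (Hc1 (F w) Hf v Hv eps Heps) as [d2 Hd2].
      destruct (Hc2 (F w) Hf v Hv eps Heps) as [d3 Hd3].
      destruct (dir_up _ _ Hdir d1 d2) as (c1 & Hc11 & Hc12).
      destruct (dir_up _ _ Hdir c1 d3) as (c & Hc & Hc3).
      exists c. intros w' [<-|Hw'] d Hd.
      + exists v. split; auto. split.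
        * intros r Hr. apply (Hd2 d); auto. apply (dir_trans _ _ Hdir _ c1); auto. apply (dir_trans _ _ Hdir _ c); auto.
        * intros r Hr. apply (Hd3 d); auto. apply (dir_trans _ _ Hdir _ c); auto.
      + apply Hd1; auto. apply (dir_trans _ _ Hdir _ c1); auto. apply (dir_trans _ _ Hdir _ c); auto. }
  destruct (Hall ws) as [ds Hds].
  set (tt := t ds).
  destruct (Hws (act tt y0)) as (w & Hw & Hwz).
  destruct (Hds w Hw ds (dir_refl _ _ Hdir ds)) as (v & _ & Hq1 & Hq2).
  fold tt in Hq1, Hq2. rewrite !mix_push in Hq1, Hq2. simpl map in Hq2.
  assert (Hf0 : forall x, 0 <= F w x) by (intro; apply HHF).
  assert (Hf1 : forall x, F w x <= 1) by (intro; apply HHF).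
  assert (Hf : continuous_real op (F w)) by apply HHF.
  assert (Hne' : map (act tt) ys <> nil) by (intro Hm; apply Hne; destruct ys; simpl in Hm; congruence).
  destruct (integral_exists op (mix (map (act tt) ys)) (F w) (lsum (F w) (map (act tt) ys) / INR (length (map (act tt) ys))) Hf0)
    as (r1 & Hr1 & Hr1le).
  { intros s Hs. apply (mix_lower op); auto. }
  destruct (integral_exists op (mix (act tt y0 :: nil)) (F w) 1 Hf0) as (r2 & Hr2 & _).
  { intros s Hs. apply (prob_lower op _ (F w) s (mix_prob op (act tt y0 :: nil) (fun H => @nil_cons _ (act tt y0) nil (eq_sym H)))); auto. }
  assert (Hr2ge : a <= r2).
  { apply (proj1 Hr2). apply dirac_lower; auto; [lra| |]. - intros; apply borel_open; auto. - apply op_lt; auto. }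
  specialize (Hq1 r1 Hr1). specialize (Hq2 r2 Hr2).
  apply Rabs_def2 in Hq1. apply Rabs_def2 in Hq2.
  rewrite length_map in Hr1le. fold N in Hr1le.
  set (S := lsum (F w) (map (act tt) ys)) in *.
  assert (HS : N - 3 / 4 < S).
  { assert (r1 * N <= S). { replace S with (S / N * N) by (field; lra). apply Rmult_le_compat_r. lra. lra. }
    assert (E : (1 - 3 * eps) * N = N - 3 / 4) by (unfold eps; field; lra).
    assert (1 - 3 * eps < r1) by (unfold a in *; lra).
    assert ((1 - 3 * eps) * N < r1 * N) by (apply Rmult_lt_compat_r; lra). lra. }
  exists (mul (fst (HF w)) tt). intros y Hy. rewrite act_mul.
  apply HHF. fold (F w). apply NNPP. intro Hle. apply Rnot_lt_le in Hle.
  assert (Hin : In (act tt y) (map (act tt) ys)) by (apply in_map; auto).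
  pose proof (lsum_drop (F w) _ _ Hin (fun a _ => Hf1 a)). rewrite length_map in H. fold N S in H. lra.
Qed.

End Main.

Section Fin.
Context (G : Type) (mul : G -> G -> G) (inv : G -> G) (e : G)
  (X : Type) (op : (X -> Prop) -> Prop) (act : G -> X -> X)
  (HG : is_group G mul inv e) (Hact : is_action mul e op act).

Lemma conj_char x ts s : conj_intersection mul inv act x ts s <->
  forall t, In t ts -> act s (act t x) = act t x.
Proof.
  destruct HG as [Ha Hl Hr Hil Hir]. destruct Hact as (He & Hm & _).
  split.
  - intros H t Ht. destruct (H t Ht) as (h & Hh & ->). unfold stabilizer in Hh.
    rewrite !Hm. rewrite <- (Hm (inv t) t), Hil, He, Hh. reflexivity.
  - intros H t Ht. exists (mul (mul (inv t) s) t). split.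
    + unfold stabilizer. rewrite !Hm, H; auto. rewrite <- Hm, Hil, He. reflexivity.
    + rewrite !Ha, Hir, Hl, <- Ha, Hir, Hr. reflexivity.
Qed.

Lemma part1 (Hcpt : compact_sp op) (Htop : is_topology X op) (Hhaus : hausdorff_sp op)
  (Hbd : G_boundary op act) (Hnf : ~ topologically_free e op act) x ts :
  ts <> nil -> exists s, s <> e /\ conj_intersection mul inv act x ts s.
Proof.
  intro Hne. unfold topologically_free in Hnf.
  apply not_all_ex_not in Hnf as [s0 Hs0]. apply imply_to_and in Hs0 as [Hs0e Hs0].
  apply not_all_ex_not in Hs0 as [U HU]. apply imply_to_and in HU as [HU HU'].
  apply imply_to_and in HU' as [Hfix HU']. apply not_all_ex_not in HU' as [y0 Hy0]. apply NNPP in Hy0.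
  destruct Hbd as [Hmin Hsp].
  destruct (collapse G mul e X op act Htop Hcpt Hhaus Hact Hmin Hsp (map (fun t => act t x) ts) U)
    as [g Hg]; eauto.
  { intro Hm; apply Hne; destruct ts; simpl in Hm; congruence. }
  destruct HG as [Ha Hl Hr Hil Hir]. destruct Hact as (He & Hm & _).
  exists (mul (mul (inv g) s0) g). split.
  - intro Hs. apply Hs0e. 
    assert (mul g (mul (mul (mul (inv g) s0) g) (inv g)) = s0).
    { rewrite !Ha, Hir, Hl, <- Ha, Hir, Hr. reflexivity. }
    rewrite Hs, Hl, Hir in H. auto.
  - apply conj_char. intros t Ht. rewrite !Hm. rewrite Hfix.
    + rewrite <- Hm, Hil, He. reflexivity.
    + apply Hg. apply in_map_iff. eauto.
Qed.

Lemma filter_len_lt {A} (f : A -> bool) l a : In a l -> f a = false -> (length (filter f l) < length l)%nat.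
Proof.
  induction l as [|b l IH]; simpl; intros Hin Hf; [contradiction|].
  assert (length (filter f l) <= length l)%nat.
  { clear. induction l; simpl; [lia|]. destruct (f a); simpl; lia. }
  destruct Hin as [<-|Hin].
  - rewrite Hf. lia.
  - destruct (f b); simpl; specialize (IH Hin Hf); lia.
Qed.

Lemma part2 (P1 : forall x ts, ts <> nil -> exists s, s <> e /\ conj_intersection mul inv act x ts s)
  (Hnn : no_nontrivial_finite_normal mul inv e) x :
  forall n ts L, ts <> nil -> (length L <= n)%nat ->
  (forall s, conj_intersection mul inv act x ts s -> In s L) -> False.
Proof.
  destruct HG as [Ha Hl Hr Hil Hir]. pose proof Hact as (He & Hm & _).
  induction n as [|n IH]; intros ts L Hne HL Hsub.
  - destruct (P1 x ts Hne) as (s & _ & Hs). apply Hsub in Hs. destruct L; simpl in *; [auto|lia].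
  - destruct (classic (exists s g, conj_intersection mul inv act x ts s /\ act s (act g x) <> act g x))
      as [(s & g & Hs & Hsg)|Hno].
    + set (L' := filter (fun a => if excluded_middle_informative (a = s) then false else true) L).
      apply (IH (g :: ts) L'); [congruence| |].
      * assert (length L' < length L)%nat; [|lia]. apply (filter_len_lt _ _ s); auto.
        destruct excluded_middle_informative; congruence.
      * intros q Hq. unfold L'. apply filter_In. rewrite conj_char in Hq. split.
        -- apply Hsub. apply conj_char. intros t Ht; apply Hq; simpl; auto.
        -- destruct excluded_middle_informative as [->|]; auto. exfalso. apply Hsg, Hq. simpl; auto.
    + set (K := fun s => forall g, act s (act g x) = act g x).
      assert (HK : forall s, K s -> s = e).
      { apply Hnn.
        - unfold is_subgroup, K. split; [|split].
          + intro g. rewrite He; auto.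
          + intros a b H1 H2 g. rewrite Hm, H2, H1. auto.
          + intros a H1 g. rewrite <- (H1 g) at 1. rewrite <- Hm, Hil, He. reflexivity.
        - unfold is_normal, K. intros g h Hh y. rewrite !Hm. rewrite <- (Hm (inv g) y x), Hh.
          rewrite <- Hm, Ha, Hir, Hl. reflexivity.
        - exists L. intros s Hs. apply Hsub. apply conj_char. intros t _. apply Hs. }
      destruct (P1 x ts Hne) as (s & Hse & Hs). apply Hse, HK. intro g.
      apply NNPP. intro Hn. apply Hno. eauto.
Qed.

End Fin.

Close Scope R_scope.
Theorem lemma2p11 (G : Type) (mul : G -> G -> G) (inv : G -> G) (e : G)
  (X : Type) (op : (X -> Prop) -> Prop) (act : G -> X -> X)
  (HG : is_group G mul inv e)
  (Htop : is_topology X op) (Hcpt : compact_sp op) (Hhaus : hausdorff_sp op)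
  (Hact : is_action mul e op act)
  (Hbd : G_boundary op act)
  (Hnf : ~ topologically_free e op act) :
  (forall (x : X) (ts : list G), (ts <> nil) ->
     exists s, s <> e /\ conj_intersection mul inv act x ts s) /\
  (no_nontrivial_finite_normal mul inv e ->
   forall (x : X) (ts : list G), (ts <> nil) ->
     ~ finite_set (conj_intersection mul inv act x ts)).
Proof.
  assert (P1 := part1 G mul inv e X op act HG Hact Hcpt Htop Hhaus Hbd Hnf).
  split; auto.
  intros Hnn x ts Hne [L HL]. apply (part2 G mul inv e X op act HG Hact P1 Hnn x (length L) ts L); auto.
Qed.
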